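(* Suppose $\Phi$ has type $D_m$ with $m\ge3$, and let $\lambda\in\mathfrak h_K^*$ with $\lambda(p^n\mathfrak h_R)\subseteq R$ be a weight which is not regular integral. Then there exist $\beta_1,\dots,\beta_r\in\Delta$ such that $(s_{\beta_{i-1}}\cdots s_{\beta_1}\cdot\lambda)(h_{\beta_i})\notin\mathbb N_0$ for all $1\le i\le r$, and $s_{\beta_r}\cdots s_{\beta_1}\cdot\lambda\in S_{\mathfrak g}$.
   Context: $\mathfrak g$ is an $\mathcal O_F$-lattice ($F/\mathbb Q_p$ finite, $p$ odd) in a split simple $F$-Lie algebra with Chevalley basis, root system $\Phi$, simple roots $\Delta$, Cartan $\mathfrak h$; $K/F$ finite with ring of integers $R$; $n\in\mathbb N_0$ fixed; $\lambda(h_\alpha)=\langle\lambda,\alpha^\vee\rangle$. Labelling: for $m\ge4$, $\Delta=\{\alpha_1,\dots,\alpha_m\}$ with $\alpha_i$ adjacent to $\alpha_{i+1}$ for $i\le m-2$ and $\alpha_{m-2}$ adjacent to $\alpha_m$ (standard $D_m$ diagram, $\alpha_{m-1},\alpha_m$ the two end nodes at the fork); type $D_3$ means type $A_3$ with simple roots labelled so that $\alpha_1$ is the middle node, adjacent to $\alpha_2$ and $\alpha_3$. $W$ is the Weyl group, $\rho$ half the sum of positive roots, $w\cdot\lambda=w(\lambda+\rho)-\rho$, $\Phi_\lambda=\{\alpha\in\Phi:\langle\lambda+\rho,\alpha^\vee\rangle\in\mathbb Z\}$. $\lambda$ is regular integral if $\langle\lambda+\rho,\alpha^\vee\rangle\in\mathbb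 Z\setminus\{0\}$ for all $\alpha\in\Phi$. A subset of $\Delta$ is connected if its full subgraph of the Dynkin diagram is connected. $S_{\mathfrak g}$ is the set of $\lambda\in\mathfrak h_K^*$ with $\lambda(p^n\mathfrak h_R)\subseteq R$ such that: $\lambda$ is not dominant integral (i.e. not all $\lambda(h_\alpha)\in\mathbb N_0$, $\alpha\in\Delta$); $\Delta\setminus\Phi_\lambda$ is either empty or a connected subset of $\Delta$ containing $\alpha_1$; and $\langle\lambda+\rho,\alpha^\vee\rangle\notin\mathbb Z_{<0}$ for all $\alpha\in\Delta$. *)

(* Defs.v *)
(* Root system of type D_m realized in the standard
   epsilon-coordinates; weights are row vectors in K^m. *)
From mathcomp Require Import all_boot all_order all_algebra.
Set Implicit Arguments. Unset Strict Implicit. Unset Printing Implicit Defensive.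
Import Order.TTheory GRing.Theory Num.Theory.
Local Open Scope ring_scope.

Section DRoot.
Variables (K : fieldType) (m : nat).

Definition eps (k : nat) : 'rV[K]_m := \row_(j < m) ((j : nat) == k)%:R.

(* standard bilinear form; for roots of D_m (norm 2) we have a^vee = a,
   so <mu, a^vee> = form mu a *)
Definition form (x y : 'rV[K]_m) : K := \sum_(j < m) x 0 j * y 0 j.

Definition is_root (a : 'rV[K]_m) : Prop :=
  exists (i j : 'I_m) (s t : bool),
    i != j /\ a = (-1) ^+ s *: eps i + (-1) ^+ t *: eps j.

(* simple roots, 0-indexed: alpha i = eps_i - eps_(i+1) for i < m-1,
   alpha (m-1) = eps_(m-2) + eps_(m-1).  The paper's alpha_(i+1) is alpha i. *)
Definition alpha (i : 'I_m) : 'rV[K]_m :=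
  if ((i : nat).+1 < m)%N then eps i - eps (i : nat).+1
  else eps (m - 2) + eps (m - 1).

(* rho = half sum of positive roots of D_m = (m-1, m-2, ..., 1, 0) *)
Definition rho : 'rV[K]_m := \row_(j < m) (m - 1 - j)%:R.

(* lambda(h_a) = <lambda, a^vee> *)
Definition ev (lam a : 'rV[K]_m) : K := form lam a.

(* dot action of the reflection s_a : s_a . lam = s_a(lam + rho) - rho *)
Definition sdot (a lam : 'rV[K]_m) : 'rV[K]_m :=
  lam - form (lam + rho) a *: a.

(* s_(b_k) ... s_(b_1) . lam  for bs = [:: b_1; ...; b_k] *)
Definition sdots (bs : seq 'I_m) (lam : 'rV[K]_m) : 'rV[K]_m :=
  foldl (fun mu b => sdot (alpha b) mu) lam bs.

Definition isInt (x : K) : Prop := exists z : int, x = z%:~R.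
Definition isNat (x : K) : Prop := exists k : nat, x = k%:R.

Definition regular_integral (lam : 'rV[K]_m) : Prop :=
  forall a, is_root a -> exists z : int, z != 0 /\ form (lam + rho) a = z%:~R.

(* lambda(p^n h_R) \subseteq R, h_R = R-span of the h_(alpha_i) *)
Definition lattice_cond (R : {pred K}) (p n : nat) (lam : 'rV[K]_m) : Prop :=
  forall r : 'I_m -> K, (forall i, r i \in R) ->
    (p ^ n)%:R * (\sum_(i < m) r i * ev lam (alpha i)) \in R.

Definition dominant_integral (lam : 'rV[K]_m) : Prop :=
  forall i, isNat (ev lam (alpha i)).

Definition adj (i j : 'I_m) : Prop := i != j /\ form (alpha i) (alpha j) != 0.

Inductive reach (S : 'I_m -> Prop) (i : 'I_m) : 'I_m -> Prop :=
| reach_refl : S i -> reach S i i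
| reach_step j k : reach S i j -> S k -> adj j k -> reach S i k.

Definition connected (S : 'I_m -> Prop) : Prop :=
  forall i j, S i -> S j -> reach S i j.

(* Delta \ Phi_lambda, as a predicate on indices of simple roots *)
Definition nonint_simple (lam : 'rV[K]_m) (i : 'I_m) : Prop :=
  ~ isInt (form (lam + rho) (alpha i)).

Definition in_S (R : {pred K}) (p n : nat) (lam : 'rV[K]_m) : Prop :=
  [/\ lattice_cond R p n lam,
      ~ dominant_integral lam,
      (forall i, ~ nonint_simple lam i) \/
        ((forall i : 'I_m, (i : nat) = 0%N -> nonint_simple lam i)
         /\ connected (nonint_simple lam))
    & forall i, ~ exists k : nat, form (lam + rho) (alpha i) = - (k.+1)%:R].

End DRoot.

(* Main.v *)
Require Import Defs.
From mathcomp Require Import all_boot all_order all_algebra.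
From Stdlib Require Import Lia.
From mathcomp Require Import zify ring.
From Stdlib Require Classical_Prop.
Set Warnings "-notation-overridden,-ambiguous-paths".
Set Implicit Arguments. Unset Strict Implicit. Unset Printing Implicit Defensive.
Import GRing.Theory.
Local Open Scope ring_scope.
Local Notation dform := Defs.form.

Section Basic.
Variables (K : fieldType) (m : nat).
Implicit Types (x y z : 'rV[K]_m).

Lemma formC x y : dform x y = dform y x.
Proof. by apply: eq_bigr => j _; rewrite mulrC. Qed.

Lemma formDr x y z : dform x (y + z) = dform x y + dform x z.
Proof. by rewrite /dform -big_split; apply: eq_bigr => j _; rewrite mxE mulrDr. Qed.
Lemma formNr x y : dform x (- y) = - dform x y.
Proof. by rewrite /dform -sumrN; apply: eq_bigr => j _; rewrite mxE mulrN. Qed.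
Lemma formBr x y z : dform x (y - z) = dform x y - dform x z.
Proof. by rewrite formDr formNr. Qed.
Lemma formZr x (c : K) y : dform x (c *: y) = c * dform x y.
Proof. by rewrite /dform mulr_sumr; apply: eq_bigr => j _; rewrite mxE mulrCA. Qed.
Lemma formDl x y z : dform (y + z) x = dform y x + dform z x.
Proof. by rewrite formC formDr !(formC x). Qed.
Lemma formNl x y : dform (- y) x = - dform y x.
Proof. by rewrite formC formNr formC. Qed.
Lemma formBl x y z : dform (y - z) x = dform y x - dform z x.
Proof. by rewrite formDl formNl. Qed.
Lemma formZl x (c : K) y : dform (c *: y) x = c * dform y x.
Proof. by rewrite formC formZr formC. Qed.

Lemma form_eps x k (hk : (k < m)%N) : dform x (eps K m k) = x 0 (Ordinal hk).
Proof.
rewrite /dform (bigD1 (Ordinal hk)) //= big1 ?addr0.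
  by rewrite mxE eqxx mulr1.
by move=> j hj; rewrite mxE; case: eqP => [e|]; rewrite ?mulr0 //;
   move: hj; rewrite -val_eqE /= e eqxx.
Qed.

Lemma form_eps_out x k : (m <= k)%N -> dform x (eps K m k) = 0.
Proof.
move=> hk; rewrite /dform big1 // => j _; rewrite mxE.
case: eqP => [e|]; last by rewrite mulr0.
by move: (ltn_ord j); rewrite e ltnNge hk.
Qed.

Lemma form_eps2 i k : dform (eps K m i) (eps K m k) = ((i == k) && (k < m)%N)%:R.
Proof.
case: (ltnP k m) => hk; last by rewrite form_eps_out // andbF.
by rewrite form_eps mxE /= andbT eq_sym.
Qed.

End Basic.
Section Coords.
Variables (K : fieldType) (m : nat).
Implicit Types (lam : 'rV[K]_m).

Definition mu lam := lam + rho K m.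
Definition cx lam k := dform (mu lam) (eps K m k).

Lemma form_alpha x (i : 'I_m) : dform x (alpha K i) =
  if (i.+1 < m)%N then dform x (eps K m i) - dform x (eps K m i.+1)
  else dform x (eps K m (m - 2)) + dform x (eps K m (m - 1)).
Proof. by rewrite /alpha; case: ifP => _; rewrite ?formBr ?formDr. Qed.

Lemma form_alpha_l x (i : 'I_m) : dform (alpha K i) x =
  if (i.+1 < m)%N then dform (eps K m i) x - dform (eps K m i.+1) x
  else dform (eps K m (m - 2)) x + dform (eps K m (m - 1)) x.
Proof. by rewrite /alpha; case: ifP => _; rewrite ?formBl ?formDl. Qed.

Lemma form_rho_alpha (hm : (2 <= m)%N) (i : 'I_m) : dform (rho K m) (alpha K i) = 1.
Proof.
rewrite form_alpha; case: ifP => hi.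
  rewrite (form_eps _ (ltnW hi)) form_eps !mxE /=.
  have -> : (m - 1 - i = (m - 1 - i.+1).+1)%N by rewrite -subSn ?subSS; lia.
  by rewrite -addn1 natrD addrAC subrr add0r.
have h2 : (m - 2 < m)%N by lia.
have h1 : (m - 1 < m)%N by lia.
rewrite (form_eps _ h2) (form_eps _ h1) !mxE /=.
have -> : (m - 1 - (m - 2) = 1)%N by lia.
by rewrite subnn addr0.
Qed.

Lemma ev_alpha (hm : (2 <= m)%N) lam i :
  dform (mu lam) (alpha K i) = ev lam (alpha K i) + 1.
Proof. by rewrite /mu formDl form_rho_alpha. Qed.

Lemma mu_sdot a lam : mu (sdot a lam) = mu lam - dform (mu lam) a *: a.
Proof. by rewrite /mu /sdot addrAC. Qed.

Lemma cx_sdot a lam k :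
  cx (sdot a lam) k = cx lam k - dform (mu lam) a * dform a (eps K m k).
Proof. by rewrite /cx mu_sdot formBl formZl. Qed.

Lemma cx_out lam k : (m <= k)%N -> cx lam k = 0.
Proof. exact: form_eps_out. Qed.

Lemma form_alpha_cx lam (i : 'I_m) : dform (mu lam) (alpha K i) =
  if (i.+1 < m)%N then cx lam i - cx lam i.+1
  else cx lam (m - 2) + cx lam (m - 1).
Proof. exact: form_alpha. Qed.

Definition swapnode p (hp : (p.+1 < m)%N) : 'I_m := Ordinal (ltnW hp).

Lemma alpha_swap p (hp : (p.+1 < m)%N) : alpha K (swapnode hp) = eps K m p - eps K m p.+1.
Proof. by rewrite /alpha /= hp. Qed.

Lemma cx_swap p (hp : (p.+1 < m)%N) lam k :
  cx (sdot (alpha K (swapnode hp)) lam) k =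
  if k == p then cx lam p.+1 else if k == p.+1 then cx lam p else cx lam k.
Proof.
rewrite cx_sdot alpha_swap formBr formBl !form_eps2 -/(cx lam p) -/(cx lam p.+1).
case: (ltnP k m) => hk; last first.
  rewrite !andbF subrr mulr0 subr0.
  have -> : (k == p) = false by apply/eqP; lia.
  by have -> : (k == p.+1) = false by apply/eqP; lia.
rewrite !andbT; case: (eqVneq k p) => [->|kp].
  rewrite (_ : (p.+1 == p) = false); last by apply/eqP; lia.
  by rewrite subr0 mulr1 opprB addrC subrK.
rewrite sub0r; case: (eqVneq k p.+1) => [->|kp1].
  by rewrite ?eqxx mulrN1 opprK addrC subrK.
by rewrite /= mulr0n oppr0 mulr0 subr0.
Qed.

Lemma flip_lt (hm : (2 <= m)%N) : (m - 1 < m)%N. Proof. lia. Qed.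
Definition flipnode (hm : (2 <= m)%N) : 'I_m := Ordinal (flip_lt hm).

Lemma alpha_flip hm : alpha K (flipnode hm) = eps K m (m - 2) + eps K m (m - 1).
Proof. by rewrite /alpha /= (_ : (m - 1).+1 < m = false)%N //; lia. Qed.

Lemma cx_flip hm lam k :
  cx (sdot (alpha K (flipnode hm)) lam) k =
  if k == (m - 2)%N then - cx lam (m - 1) else if k == (m - 1)%N then - cx lam (m - 2) else cx lam k.
Proof.
rewrite cx_sdot alpha_flip formDr formDl !form_eps2 -/(cx lam (m - 2)) -/(cx lam (m - 1)).
case: (ltnP k m) => hk; last first.
  rewrite !andbF addr0 mulr0 subr0.
  have -> : (k == m - 2)%N = false by apply/eqP; lia.
  by have -> : (k == m - 1)%N = false by apply/eqP; lia.
rewrite !andbT; case: (eqVneq k (m - 2)%N) => [->|kp].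
  rewrite ?eqxx (_ : (m - 1 == m - 2)%N = false); last by apply/eqP; lia.
  by rewrite /= addr0 mulr1 opprD addrA subrr add0r.
rewrite /= add0r.
case: (eqVneq k (m - 1)%N) => [->|kp1].
  by rewrite ?eqxx /= mulr1 opprD addrCA subrr addr0.

by rewrite /= mulr0n mulr0 subr0.
Qed.

End Coords.

Section Paths.
Variables (K : fieldType) (m : nat).
Implicit Types (lam : 'rV[K]_m) (bs : seq 'I_m).

Definition okpath lam bs := forall s1 s2 b, bs = s1 ++ b :: s2 ->
  ~ isNat (ev (sdots s1 lam) (alpha K b)).
Definition reachable lam lam' := exists bs, okpath lam bs /\ sdots bs lam = lam'.

Lemma sdots_cat s t lam : sdots (s ++ t) lam = sdots t (sdots s lam).
Proof. by rewrite /sdots foldl_cat. Qed.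

Lemma cat_split (T : Type) (u v s1 s2 : seq T) b : u ++ v = s1 ++ b :: s2 ->
  (exists s2', u = s1 ++ b :: s2') \/ (exists s1', s1 = u ++ s1' /\ v = s1' ++ b :: s2).
Proof.
elim: u s1 => [|x u IH] s1 /=.
  by move=> ->; right; exists s1.
case: s1 => [|y s1] /= [-> e].
  by left; exists u.
case: (IH _ e) => [[s2' ->]|[s1' [-> ->]]].
  by left; exists s2'.
by right; exists s1'.
Qed.

Lemma reachable_refl lam : reachable lam lam.
Proof. by exists [::]; split => //; case. Qed.

Lemma reachable_trans l1 l2 l3 : reachable l1 l2 -> reachable l2 l3 -> reachable l1 l3.
Proof.
move=> [u [hu <-]] [v [hv <-]]; exists (u ++ v); split; last by rewrite sdots_cat.
move=> s1 s2 b e0; case: (cat_split e0) => [[s2' e]|[s1' [-> e]]]; first exact: (hu _ _ _ e).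
rewrite sdots_cat; exact: (hv _ _ _ e).
Qed.

Lemma reachable_step lam b : ~ isNat (ev lam (alpha K b)) ->
  reachable lam (sdot (alpha K b) lam).
Proof.
move=> h; exists [:: b]; split => //.
by move=> [|x [|y s1]] s2 b' //= [<-].
Qed.

End Paths.

Section Ints.
Variable K : fieldType.
Implicit Types x y : K.

Lemma isInt_nat (k : nat) : isInt (k%:R : K).
Proof. by exists k%:Z. Qed.
Lemma isIntD x y : isInt x -> isInt y -> isInt (x + y).
Proof. by move=> [a ->] [b ->]; exists (a + b); rewrite rmorphD. Qed.
Lemma isIntN x : isInt x -> isInt (- x).
Proof. by move=> [a ->]; exists (- a); rewrite rmorphN. Qed.
Lemma isIntB x y : isInt x -> isInt y -> isInt (x - y).
Proof. by move=> hx hy; apply: isIntD => //; apply: isIntN. Qed.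
Lemma isIntM x y : isInt x -> isInt y -> isInt (x * y).
Proof. by move=> [a ->] [b ->]; exists (a * b); rewrite rmorphM. Qed.
Lemma isInt0 : isInt (0 : K). Proof. by exists 0. Qed.
Lemma isInt1 : isInt (1 : K). Proof. by exists 1. Qed.
Lemma isNat_Int x : isNat x -> isInt x.
Proof. by move=> [k ->]; apply: isInt_nat. Qed.
Lemma isInt_DBl x y : isInt y -> isInt (x + y) -> isInt x.
Proof. by move=> hy hxy; rewrite -(addrK y x); apply: isIntB. Qed.

End Ints.

Section Graph.
Variables (K : fieldType) (m : nat).
Implicit Types (S : 'I_m -> Prop).

Lemma reach_S S i j : reach K S i j -> S i /\ S j.
Proof. elim=> [//|j' k _ [hi _] hk _]; by []. Qed.

Lemma reach_trans S i j k : reach K S i j -> reach K S j k -> reach K S i k.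
Proof.
move=> hij hjk; elim: hjk hij => [//|j' k' _ IH hk hadj] hij.
exact: (reach_step (IH hij) hk hadj).
Qed.

Lemma adj_sym (i j : 'I_m) : adj K i j -> adj K j i.
Proof. by move=> [h1 h2]; split; [rewrite eq_sym | rewrite formC]. Qed.

Lemma reach_sym S i j : reach K S i j -> reach K S j i.
Proof.
elim=> [hi|j' k hij IH hk hadj]; first exact: reach_refl.
have [_ hj'] := reach_S hij.
apply: reach_trans IH.
exact: (reach_step (reach_refl _ hk) hj' (adj_sym hadj)).
Qed.

Lemma connected_of_root S i0 : (forall j, S j -> reach K S i0 j) -> connected K S.
Proof.
move=> h i j hi hj; apply: reach_trans (h j hj).
exact: reach_sym (h i hi).
Qed.

Lemma eqn_false (a b : nat) : a <> b -> (a == b) = false.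
Proof. by move/eqP/negbTE. Qed.

Lemma adj_next (i j : 'I_m) : (j : nat) = i.+1 -> (j.+1 < m)%N -> adj K i j.
Proof.
move=> e hj; split; first by rewrite -val_eqE /= e; apply/eqP => h; lia.
have h1 : (i.+1 < m)%N by lia.
have h2 : (i.+2 < m)%N by lia.
have n1 : ((i : nat) == i.+1) = false by apply/eqP; lia.
have n2 : ((i : nat) == i.+2) = false by apply/eqP; lia.
have n3 : (i.+1 == i.+2) = false by apply/eqP; lia.
rewrite form_alpha_l !form_alpha h1 hj !form_eps2 e h1 h2 n1 n2 n3 eqxx /=.
by rewrite !mulr0n mulr1n !subr0 sub0r oppr_eq0 oner_eq0.
Qed.

Lemma adj_fork (i j : 'I_m) : (3 <= m)%N -> (i : nat) = (m - 3)%N -> (j : nat) = (m - 1)%N -> adj K i j.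
Proof.
move=> hm ei ej; split; first by rewrite -val_eqE /= ei ej; apply/eqP => h; lia.
have h0 : (i.+1 < m)%N by lia.
have h0' : (j.+1 < m)%N = false by apply/negbTE; rewrite -leqNgt; lia.
have h1 : (m - 2 < m)%N by lia.
have h2 : (m - 1 < m)%N by lia.
have e3 : (m - 3).+1 = (m - 2)%N by lia.
have n1 : (m - 3 == m - 2)%N = false by apply/eqP; lia.
have n2 : (m - 3 == m - 1)%N = false by apply/eqP; lia.
have n3 : (m - 2 == m - 1)%N = false by apply/eqP; lia.
rewrite form_alpha_l !form_alpha h0 h0' ei e3 !form_eps2 h1 h2 n1 n2 n3 eqxx /=.
by rewrite !mulr0n ?mulr1n !addr0 sub0r oppr_eq0 oner_eq0.
Qed.

End Graph.

Section Step1.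
Variables (K : fieldType) (m : nat).
Implicit Types (lam : 'rV[K]_m).

Definition goodN lam := (forall i, ~ nonint_simple lam i) \/
  ((forall i : 'I_m, (i : nat) = 0%N -> nonint_simple lam i) /\ connected K (nonint_simple lam)).

Definition NI lam p := ~ isInt (cx lam p - cx lam p.+1).

Lemma nonint_cx lam (i : 'I_m) : nonint_simple lam i <->
  ~ isInt (if (i.+1 < m)%N then cx lam i - cx lam i.+1 else cx lam (m - 2) + cx lam (m - 1)).
Proof. by rewrite /nonint_simple -form_alpha_cx. Qed.

Lemma nonint_swap lam (i : 'I_m) : (i.+1 < m)%N -> nonint_simple lam i <-> NI lam i.
Proof. by move=> h; rewrite nonint_cx h. Qed.

Lemma chain (S : 'I_m -> Prop) (i0 : 'I_m) : (i0 : nat) = 0%N -> forall q, (q.+1 < m)%N ->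
  (forall j : 'I_m, (j <= q)%N -> S j) -> forall j : 'I_m, (j : nat) = q -> reach K S i0 j.
Proof.
move=> e0; elim=> [|q IH] hq hS j ej.
  have -> : j = i0 by apply/val_inj; rewrite /= ej e0.
  by apply: reach_refl; apply: hS; rewrite e0.
have hq' : (q < m)%N by lia.
have := IH (ltnW hq) (fun j' hj' => hS j' (leqW hj')) (Ordinal hq') erefl.
move=> hr; apply: (reach_step hr (hS j _)); first by rewrite ej.
by apply: adj_next; rewrite ?ej.
Qed.

Lemma goodA (hm : (3 <= m)%N) lam : (forall p, (p <= m - 3)%N -> NI lam p) -> goodN lam.
Proof.
move=> hNI; right.
have hm0 : (0 < m)%N by lia.
set i0 : 'I_m := Ordinal hm0.
have hS : forall j : 'I_m, (j <= m - 3)%N -> nonint_simple lam j.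
  by move=> j hj; apply/nonint_swap; [lia | apply: hNI].
split; first by move=> i ei; apply: hS; rewrite ei.
apply: (@connected_of_root _ _ _ i0) => j hj.
case: (leqP j (m - 3)) => hj3.
  apply: (@chain _ i0 erefl j) => //; first lia.
  by move=> j' hj'; apply: hS; lia.
case: (eqVneq (j : nat) (m - 2)%N) => ej.
  apply: (@chain _ i0 erefl j) => //; first lia.
  move=> j' hj'; case: (leqP j' (m - 3)) => h; first exact: hS.
  by have -> : j' = j by apply/val_inj; rewrite /= ej; lia.
have ej1 : (j : nat) = (m - 1)%N by have := ltn_ord j; lia.
have hm3 : (m - 3 < m)%N by lia.
have hr := @chain _ i0 erefl (m - 3) (ltac:(lia)) (fun j' hj' => hS j' hj') (Ordinal hm3) erefl.
by apply: (reach_step hr hj); apply: adj_fork.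
Qed.

Lemma goodB (hm : (3 <= m)%N) lam k : (k <= m - 3)%N ->
  (forall p, (p < k)%N -> NI lam p) ->
  (forall t, (k <= t < m)%N -> isInt (cx lam t - cx lam k)) ->
  isInt (cx lam (m - 2) + cx lam (m - 1)) -> goodN lam.
Proof.
move=> hk hNI hint hflip.
have hnot : forall i : 'I_m, (k <= i)%N -> ~ nonint_simple lam i.
  move=> i hi; rewrite nonint_cx; case: ifP => hi1; apply.
    rewrite (_ : cx lam i - cx lam i.+1 = (cx lam i - cx lam k) - (cx lam i.+1 - cx lam k)).
      by apply: isIntB; apply: hint; lia.
    by rewrite opprB addrA subrK.
  exact: hflip.
case: (posnP k) => [k0|kpos].
  by left => i; apply: hnot; rewrite k0.
right.
have hm0 : (0 < m)%N by lia.
set i0 : 'I_m := Ordinal hm0.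
have hS : forall j : 'I_m, (j < k)%N -> nonint_simple lam j.
  by move=> j hj; apply/nonint_swap; [lia | apply: hNI].
split; first by move=> i ei; apply: hS; rewrite ei.
apply: (@connected_of_root _ _ _ i0) => j hj.
case: (ltnP j k) => hjk; last by case: (hnot j hjk).
apply: (@chain _ i0 erefl j) => //; first lia.
by move=> j' hj'; apply: hS; lia.
Qed.

End Step1.

Section Algo1.
Variables (K : fieldType) (m : nat).
Implicit Types (lam : 'rV[K]_m).

Lemma isInt_ev (hm : (2 <= m)%N) lam b :
  isNat (ev lam (alpha K b)) -> isInt (dform (mu lam) (alpha K b)).
Proof. by move=> h; rewrite ev_alpha //; apply: isIntD; [apply: isNat_Int|apply: isInt1]. Qed.

Lemma free_step (hm : (2 <= m)%N) lam b : ~ isInt (dform (mu lam) (alpha K b)) ->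
  reachable lam (sdot (alpha K b) lam).
Proof. by move=> h; apply: reachable_step => /(isInt_ev hm). Qed.

Lemma swap_free (hm : (2 <= m)%N) lam p : (p.+1 < m)%N -> NI lam p ->
  exists lam', reachable lam lam' /\ forall k, cx lam' k =
    if k == p then cx lam p.+1 else if k == p.+1 then cx lam p else cx lam k.
Proof.
move=> hp hNI; exists (sdot (alpha K (swapnode hp)) lam); split; last exact: cx_swap.
apply: free_step => //; rewrite form_alpha_cx /= hp; exact: hNI.
Qed.

Lemma flip_free (hm : (2 <= m)%N) lam : ~ isInt (cx lam (m - 2) + cx lam (m - 1)) ->
  exists lam', reachable lam lam' /\ forall k, cx lam' k =
    if k == (m - 2)%N then - cx lam (m - 1) else if k == (m - 1)%N then - cx lam (m - 2) else cx lam k.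
Proof.
move=> hNI; exists (sdot (alpha K (flipnode hm)) lam); split; last exact: cx_flip.
apply: free_step => //; rewrite form_alpha_cx /= (_ : (m - 1).+1 < m = false)%N //; lia.
Qed.

Lemma bubble (hm : (2 <= m)%N) d : forall a lam, (a + d < m)%N ->
  (forall t, (a <= t < a + d)%N -> ~ isInt (cx lam t - cx lam (a + d))) ->
  exists lam', reachable lam lam' /\ cx lam' a = cx lam (a + d) /\
    forall t, (t < a)%N -> cx lam' t = cx lam t.
Proof.
elim: d => [|d IH] a lam had h.
  by exists lam; split; [apply: reachable_refl | rewrite addn0].
have hp : ((a + d).+1 < m)%N by lia.
have hNI : NI lam (a + d) by rewrite /NI -addnS; apply: h; lia.
have [lam1 [r1 e1]] := swap_free hm hp hNI.
have [|lam' [r' [e' e'']]] := IH a lam1 (ltac:(lia)).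
  move=> t ht; rewrite !e1 eqxx (eqn_false (_ : t <> (a + d)%N)) ?(eqn_false (_ : t <> (a + d).+1)); try lia.
  by rewrite -addnS; apply: h; lia.
exists lam'; split; first exact: reachable_trans r1 r'.
split; first by rewrite e' e1 eqxx addnS.
move=> t ht; rewrite e'' // e1 (eqn_false (_ : t <> (a + d)%N)) ?(eqn_false (_ : t <> (a + d).+1)) //; lia.
Qed.

End Algo1.

Section Algo1b.
Variables (K : fieldType) (m : nat).
Implicit Types (lam : 'rV[K]_m).

Lemma bubble' (hm : (2 <= m)%N) a j lam : (a <= j < m)%N ->
  (forall t, (a <= t < j)%N -> ~ isInt (cx lam t - cx lam j)) ->
  exists lam', reachable lam lam' /\ cx lam' a = cx lam j /\
    forall t, (t < a)%N -> cx lam' t = cx lam t.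
Proof.
move=> hj h; have e : (a + (j - a))%N = j by lia.
have := @bubble K m hm (j - a) a lam; rewrite e; apply => //; lia.
Qed.

Lemma nonint_add (x y : K) : isInt x -> ~ isInt y -> ~ isInt (x + y).
Proof. by move=> hx hy hxy; apply: hy; rewrite -(addKr x y); apply: isIntD => //; apply: isIntN. Qed.

Lemma first_fail (P : nat -> Prop) k n : (forall t, (k <= t < n)%N -> P t) \/
  exists j0, [/\ (k <= j0 < n)%N, ~ P j0 & forall t, (k <= t < j0)%N -> P t].
Proof.
elim: n => [|n [IH|IH]]; first by left => t; lia.
- case: (Classical_Prop.classic (P n)) => hn.
    by left => t ht; case: (ltnP t n) => h; [apply: IH; lia | have -> : t = n by lia].
  case: (leqP k n) => hkn.
    by right; exists n; split => //; lia.
  by left => t; lia.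
- case: IH => j0 [h1 h2 h3]; right; exists j0; split => //; lia.
Qed.

Lemma step1 (hm : (3 <= m)%N) r : forall k lam, (m <= k + 2 + r)%N ->
  (forall p, (p < k)%N -> NI lam p) -> exists lam', reachable lam lam' /\ goodN lam'.
Proof.
have hm2 : (2 <= m)%N by lia.
elim: r => [|r IH] k lam hr hpre.
  exists lam; split; first exact: reachable_refl.
  by apply: goodA => // p hp; apply: hpre; lia.
case: (leqP (m - 2) k) => hk.
  exists lam; split; first exact: reachable_refl.
  by apply: goodA => // p hp; apply: hpre; lia.
case: (Classical_Prop.classic (NI lam k)) => hNIk.
  apply: (IH k.+1) => //; first lia.
  by move=> p hp; case: (ltnP p k) => h; [apply: hpre | have -> : p = k by lia].
have hkk : isInt (cx lam k - cx lam k.+1) by apply: Classical_Prop.NNPP.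
case: (first_fail (fun t => isInt (cx lam t - cx lam k)) k m) => [hall|[j0 [hj0 hn hbef]]].
  case: (Classical_Prop.classic (isInt (cx lam (m - 2) + cx lam (m - 1)))) => hfl.
    exists lam; split; first exact: reachable_refl.
    by apply: (goodB hm (k := k)) => //; lia.
  have [lam1 [r1 e1]] := flip_free hm2 hfl.
  have key : forall t, (k <= t < m)%N -> ~ isInt (cx lam t + cx lam (m - 1)).
    move=> t ht; rewrite (_ : cx lam t + cx lam (m - 1) =
       ((cx lam t - cx lam k) - (cx lam (m - 2) - cx lam k)) + (cx lam (m - 2) + cx lam (m - 1))).
      by apply: nonint_add => //; apply: isIntB; apply: hall; lia.
    by ring.
  have [|lam2 [r2 [e2 e2']]] := bubble' (a := k.+1) (j := (m - 2)%N) (lam := lam1) hm2 (ltac:(lia)).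
    move=> t ht; rewrite !e1 eqxx (eqn_false (_ : t <> (m - 2)%N)) ?(eqn_false (_ : t <> (m - 1)%N)); try lia.
    by rewrite opprK; apply: key; lia.
  have hpre2 : forall p, (p < k.+1)%N -> NI lam2 p.
    move=> p hp; rewrite /NI.
    have t1 : forall t, (t <= k)%N -> cx lam2 t = cx lam t.
      move=> t ht; rewrite e2' ?e1; last lia.
      rewrite (eqn_false (_ : t <> (m - 2)%N)); last lia.
      by rewrite (eqn_false (_ : t <> (m - 1)%N)) //; lia.
    case: (ltnP p k) => hpk.
      by rewrite !t1; [apply: hpre| lia | lia].
    have -> : p = k by lia.
    rewrite t1 // e2 e1 eqxx opprK.
    rewrite (_ : cx lam k + cx lam (m - 1) =
       (cx lam k - cx lam (m - 2)) + (cx lam (m - 2) + cx lam (m - 1))).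
      by apply: nonint_add => //; rewrite -opprB; apply: isIntN; apply: hall; lia.
    by ring.
  have [lam3 [r3 g3]] := IH k.+1 lam2 (ltac:(lia)) hpre2.
  by exists lam3; split => //; apply: reachable_trans (reachable_trans r1 r2) r3.
have hj0k : (k < j0)%N.
  case: (ltnP k j0) => // h; exfalso; apply: hn; have -> : j0 = k by lia.
  by rewrite subrr; apply: isInt0.
have [|lam2 [r2 [e2 e2']]] := bubble' (a := k.+1) (j := j0) (lam := lam) hm2 (ltac:(lia)).
  move=> t ht; rewrite (_ : cx lam t - cx lam j0 = (cx lam t - cx lam k) + - (cx lam j0 - cx lam k)).
    apply: nonint_add; first by apply: hbef; lia.
    by move=> /isIntN; rewrite opprK.
  by ring.
have hpre2 : forall p, (p < k.+1)%N -> NI lam2 p.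
  move=> p hp; rewrite /NI.
  case: (ltnP p k) => hpk.
    by rewrite !e2'; [apply: hpre| lia | lia].
  have -> : p = k by lia.
  rewrite e2' // e2 => hh; apply: hn.
  by rewrite -opprB; apply: isIntN.
have [lam3 [r3 g3]] := IH k.+1 lam2 (ltac:(lia)) hpre2.
by exists lam3; split => //; apply: reachable_trans r2 r3.
Qed.

End Algo1b.

From Stdlib Require ClassicalEpsilon.

Section Measure.
Variables (K : fieldType) (m : nat).
Hypothesis hc : [pchar K] =i pred0.

Definition negintP (v : K) := exists k : nat, v = - (k.+1)%:R.
Definition negb_ (v : K) : bool :=
  if ClassicalEpsilon.excluded_middle_informative (negintP v) then true else false.
Lemma negbP v : negb_ v = true <-> negintP v.
Proof. by rewrite /negb_; case: ClassicalEpsilon.excluded_middle_informative. Qed.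

Lemma natr_neq0 k : (k.+1)%:R != 0 :> K.
Proof. by rewrite (proj1 (pcharf0P K) hc). Qed.

Lemma pos_not_negint k : ~ negintP (k.+1)%:R.
Proof.
move=> [j e]; move: (natr_neq0 (k + j.+1)).
by rewrite -addSn natrD e addNr eqxx.
Qed.
Lemma neg_of_negint v : negintP v -> ~ negintP (- v).
Proof. by move=> [k ->]; rewrite opprK; apply: pos_not_negint. Qed.

Definition sg (s : bool) : K := if s then 1 else -1.

Definition meas (x : nat -> K) : nat :=
  #|[set t : 'I_m * 'I_m * bool | (t.1.1 < t.1.2)%N && negb_ (x t.1.1 + sg t.2 * x t.1.2)]|.

Variables (p : nat) (e : bool).
Hypothesis hp : (p.+1 < m)%N.
Hypothesis he : e -> p.+2 = m.

Definition tau (k : nat) := if k == p then p.+1 else if k == p.+1 then p else k.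
Definition inT (k : nat) := (k == p) || (k == p.+1).

Lemma tau_lt a b : (a < b)%N -> ~ (a = p /\ b = p.+1) -> (tau a < tau b)%N.
Proof.
rewrite /tau => hab hn; case: (a =P p) => ?; case: (a =P p.+1) => ?;
  case: (b =P p) => ?; case: (b =P p.+1) => ? /=; lia.
Qed.

Lemma tau_inj a b : tau a = tau b -> a = b.
Proof.
rewrite /tau; case: (a =P p) => ?; case: (a =P p.+1) => ?;
  case: (b =P p) => ?; case: (b =P p.+1) => ? /=; lia.
Qed.

Lemma tau_eqp a : tau a = p -> a = p.+1.
Proof. rewrite /tau; case: (a =P p) => ?; case: (a =P p.+1) => ? /=; lia. Qed.
Lemma tau_eqp1 a : tau a = p.+1 -> a = p.
Proof. rewrite /tau; case: (a =P p) => ?; case: (a =P p.+1) => ? /=; lia. Qed.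

Lemma tau_ltm a : (a < m)%N -> (tau a < m)%N.
Proof. rewrite /tau; case: (a =P p) => ?; case: (a =P p.+1) => ? /=; lia. Qed.

Definition ot (a : 'I_m) : 'I_m := insubd a (tau a).
Lemma val_ot a : (ot a : nat) = tau a.
Proof. by rewrite /ot val_insubd tau_ltm. Qed.

Definition fm (t : 'I_m * 'I_m * bool) : 'I_m * 'I_m * bool :=
  let: (a, b, s) := t in
  if ((a : nat) == p) && ((b : nat) == p.+1) then t
  else (ot a, ot b, s (+) (e && inT b)).

Lemma sg_addb s c : sg (s (+) c) = sg s * (if c then -1 else 1).
Proof. by case: s; case: c; rewrite /sg /= ?mulr1 ?mulrN1 ?opprK. Qed.

Variables (x x' : nat -> K).
Hypothesis hx' : forall k, x' k = (if e && inT k then -1 else 1) * x (tau k).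
Hypothesis hneg : negintP (x p + sg e * x p.+1).

Lemma meas_dec : (meas x' < meas x)%N.
Proof.
set New := [set t : 'I_m * 'I_m * bool | (t.1.1 < t.1.2)%N && negb_ (x' t.1.1 + sg t.2 * x' t.1.2)].
set Old := [set t : 'I_m * 'I_m * bool | (t.1.1 < t.1.2)%N && negb_ (x t.1.1 + sg t.2 * x t.1.2)].
have hp0 : (p < m)%N by lia.
pose p0 : 'I_m * 'I_m * bool := (Ordinal hp0, Ordinal hp, e).
have p0Old : p0 \in Old by rewrite inE /=; apply/andP; split => //; apply/negbP.
have key : forall a b s, ((a, b, s) \in New) ->
   [/\ (a < b)%N, negintP (x' a + sg s * x' b) &
       ((a : nat) == p) && ((b : nat) == p.+1) -> s = ~~ e].
  move=> a b s; rewrite inE /= => /andP [hab /negbP hn]; split => //.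
  move=> /andP [/eqP ea /eqP eb]; move: hn; rewrite !hx' /tau /inT ea eb eqxx.
  rewrite (eqn_false (_ : p.+1 <> p)) ?eqxx /=; last lia.
  move: hneg; case: e; case: s => //= hn0 hn; exfalso; apply: (neg_of_negint hn0); move: hn;
  match goal with |- negintP ?v -> negintP ?w => have -> : v = w by rewrite /sg; ring end; done.
have tauT : tau p = p.+1 /\ tau p.+1 = p.
  by rewrite /tau eqxx (eqn_false (_ : p.+1 <> p)) ?eqxx //; lia.
have ninT : forall a b : 'I_m, (a < b)%N -> ~~ (((a : nat) == p) && ((b : nat) == p.+1)) -> (e && inT a) = false.
  move=> a b hab hE; case: e he => //= he'; have hm' := he' erefl; have hb := ltn_ord b.
  rewrite /inT; apply/negbTE/negP => /orP [] /eqP ea.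
    by move: hE; rewrite ea eqxx /= => /eqP; lia.
  lia.
have hsub : forall t, t \in New -> fm t \in Old :\ p0.
  move=> [[a b] s] /key [hab hn hexc]; rewrite /fm.
  case: ifP => hE.
    have es := hexc hE; move/andP: hE => [/eqP ea /eqP eb].
    rewrite !inE /= negb_and; apply/andP; split.
      apply/orP; right; rewrite /p0 /= es; by case: (e).
    apply/andP; split => //; apply/negbP; move: hn; rewrite !hx' ea eb /inT !eqxx orbT /=.
    case: tauT => -> ->; rewrite es; case: (e) => /=;
    match goal with |- negintP ?v -> negintP ?w => have -> : v = w by rewrite /sg; ring end; done.
  have hlt : (ot a < ot b)%N by rewrite !val_ot; apply: tau_lt => // [[ea eb]]; move: hE; rewrite ea eb !eqxx.
  rewrite !inE /= negb_and; apply/andP; split.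
    apply/orP; left; rewrite /p0 /=; apply/negP => /eqP [] ea eb.
    move: (congr1 val ea) (congr1 val eb); rewrite /= !val_ot.
    by move=> g1 g2; have := tau_eqp g1; have := tau_eqp1 g2; lia.
  apply/andP; split => //; apply/negbP; move: hn; rewrite !hx' (ninT a b hab (negbT hE)) !val_ot.
  rewrite sg_addb mul1r; case: (e && inT b) => /=;
  match goal with |- negintP ?v -> negintP ?w => have -> : v = w by rewrite /sg; ring end; done.
have hinj : {in New &, injective fm}.
  move=> [[a1 b1] s1] [[a2 b2] s2] h1 h2.
  have [hab1 _ _] := key _ _ _ h1; have [hab2 _ _] := key _ _ _ h2.
  rewrite /fm; case: ifP => E1; case: ifP => E2 //.
  - move/andP: E1 => [/eqP ea /eqP eb] [] e1 e2 _.
    move: (congr1 val e1) (congr1 val e2); rewrite /= !val_ot ea eb.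
    by move=> g1 g2; have := tau_eqp (esym g1); have := tau_eqp1 (esym g2); lia.
  - move/andP: E2 => [/eqP ea /eqP eb] [] e1 e2 _.
    move: (congr1 val e1) (congr1 val e2); rewrite /= !val_ot ea eb.
    by move=> g1 g2; have := tau_eqp g1; have := tau_eqp1 g2; lia.
  - move=> [] e1 e2 e3.
    move: (congr1 val e1) (congr1 val e2); rewrite /= !val_ot => g1 g2; have ea := tau_inj g1; have eb := tau_inj g2.
    have ea' : a1 = a2 by apply/val_inj.
    have eb' : b1 = b2 by apply/val_inj.
    move: e3.
    subst; move: h1 h2; by case: s1; case: s2; case: (e && inT b2).
have h1 : #|fm @: New| = #|New| by apply: card_in_imset.
have h2 : (#|fm @: New| <= #|Old :\ p0|)%N by apply/subset_leq_card/subsetP => y /imsetP [t ht ->]; apply: hsub.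
have h3 := cardsD1 p0 Old; rewrite p0Old in h3.
rewrite /meas -/New -/Old; lia.
Qed.

End Measure.

Section Step2.
Variables (K : fieldType) (m : nat).
Hypothesis hc : [pchar K] =i pred0.
Hypothesis hm : (3 <= m)%N.
Implicit Types (lam : 'rV[K]_m).

Lemma isInt_eps2 a b : isInt (dform (eps K m a) (eps K m b)).
Proof. by rewrite form_eps2; apply: isInt_nat. Qed.

Lemma isInt_aa (i j : 'I_m) : isInt (dform (alpha K i) (alpha K j)).
Proof.
rewrite form_alpha_l !form_alpha; case: ifP => _; case: ifP => _;
  by repeat first [apply: isIntB | apply: isIntD | apply: isInt_eps2].
Qed.

Lemma nonint_int_refl lam b : isInt (dform (mu lam) (alpha K b)) ->
  forall i, nonint_simple (sdot (alpha K b) lam) i <-> nonint_simple lam i.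
Proof.
move=> hb i; rewrite /nonint_simple.
change (~ isInt (dform (mu (sdot (alpha K b) lam)) (alpha K i)) <-> ~ isInt (dform (mu lam) (alpha K i))).
rewrite mu_sdot formBl formZl.
have hprod := isIntM hb (isInt_aa b i).
split => hn h; apply: hn.
  by apply: isIntB.
by rewrite -(subrK (dform (mu lam) (alpha K b) * dform (alpha K b) (alpha K i)) (dform (mu lam) (alpha K i))); apply: isIntD.
Qed.

Lemma reach_ext (S S' : 'I_m -> Prop) i j : (forall k, S k <-> S' k) -> reach K S i j -> reach K S' i j.
Proof.
move=> h; elim=> [hi|j' k _ IH hk ha]; first by apply: reach_refl; apply/h.
by apply: (reach_step IH _ ha); apply/h.
Qed.

Lemma goodN_ext lam lam' : (forall i, nonint_simple lam' i <-> nonint_simple lam i) -> goodN lam -> goodN lam'.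
Proof.
move=> h [h1|[h1 h2]]; [left|right].
  by move=> i /h; apply: h1.
split; first by move=> i /h1 /h.
move=> i j /h hi /h hj; apply: (reach_ext (S := nonint_simple lam)) => [k|]; first by split => /h.
exact: h2.
Qed.

Lemma nat_not_negint (j k : nat) : (j%:R : K) <> - (k.+1)%:R.
Proof.
move=> e; move: (natr_neq0 hc (j + k)); rewrite -addnS natrD e addNr eqxx //.
Qed.

Lemma neg_step lam (i : 'I_m) k : dform (mu lam) (alpha K i) = - (k.+1)%:R ->
  reachable lam (sdot (alpha K i) lam) /\ (goodN lam -> goodN (sdot (alpha K i) lam)) /\
  (meas m (cx (sdot (alpha K i) lam)) < meas m (cx lam))%N.
Proof.
have hm2 : (2 <= m)%N by lia.
move=> hk; split.
  apply: reachable_step => -[j] ej.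
  have : dform (mu lam) (alpha K i) = j%:R + 1 by rewrite ev_alpha // ej.
  rewrite hk => e2; apply: (@nat_not_negint j k.+1).
  by rewrite -natr1 opprD e2 addrK.
split.
  move=> hg; apply: goodN_ext hg; apply: nonint_int_refl; rewrite hk; apply: isIntN; apply: isInt_nat.
case: (ltnP i.+1 m) => hi.
  have ei : i = swapnode hi by apply/val_inj.
  apply: (@meas_dec K m hc i false hi) => //.
    move=> k'; rewrite ei cx_swap /tau /inT /= mul1r.
    by case: ifP => //; case: ifP.
  have hf := form_alpha_cx lam i; rewrite hi in hf.
  by rewrite /sg mulN1r -hf hk; exists k.
have ei : i = flipnode hm2 by apply/val_inj => /=; have := ltn_ord i; lia.
have hp : ((m - 2).+1 < m)%N by lia.
have e21 : (m - 2).+1 = (m - 1)%N by lia.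
apply: (@meas_dec K m hc (m - 2) true hp) => //.
- by move=> _; lia.
- move=> k'; rewrite ei cx_flip /tau /inT /= e21.
  case: (eqVneq k' (m - 2)%N) => [->|n1].
    by rewrite /= mulN1r.
  case: (k' =P (m - 1)%N) => [ek|n2] /=; first by rewrite mulN1r.
  by rewrite mul1r.
- rewrite /sg mul1r e21; exists k; rewrite -hk form_alpha_cx.
  by rewrite (_ : (i.+1 < m)%N = false) //; apply/negbTE; rewrite -leqNgt.
Qed.

Lemma step2 n : forall lam, (meas m (cx lam) <= n)%N -> goodN lam ->
  exists lam', reachable lam lam' /\ goodN lam' /\
   forall i, ~ exists k : nat, dform (mu lam') (alpha K i) = - (k.+1)%:R.
Proof.
elim: n => [|n IH] lam hn hg;
  (case: (Classical_Prop.classic (exists i, exists k : nat, dform (mu lam) (alpha K i) = - (k.+1)%:R)) =>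
    [[i [k hk]]|hno]; last first;
    [by exists lam; split; [apply: reachable_refl | split => // i hi; apply: hno; exists i]|]);
  have [r1 [g1 hlt]] := neg_step hk.
  lia.
have [lam' [r' g']] := IH (sdot (alpha K i) lam) (ltac:(lia)) (g1 hg).
by exists lam'; split => //; apply: reachable_trans r1 r'.
Qed.

End Step2.

Section RIsec.
Variables (K : fieldType) (m : nat).
Implicit Types (lam : 'rV[K]_m).

Definition Pos (v : K) := exists k : nat, v = (k.+1)%:R.
Definition RIc lam := forall i j s, (i < m)%N -> (j < m)%N -> i <> j ->
  exists z : int, z != 0 /\ cx lam i + sg K s * cx lam j = z%:~R.

Lemma RI_RIc lam : regular_integral lam -> RIc lam.
Proof.
move=> h i j s hi hj nij.
have hr : is_root ((-1) ^+ false *: eps K m i + (-1) ^+ (~~ s) *: eps K m j).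
  exists (Ordinal hi), (Ordinal hj), false, (~~ s); split => //.
  by rewrite -val_eqE /=; apply/eqP.
have [z [hz e]] := h _ hr; exists z; split => //; rewrite -e; clear hr e.
change (cx lam i + sg K s * cx lam j = dform (mu lam) ((-1) ^+ false *: eps K m i + (-1) ^+ (~~ s) *: eps K m j)).
by rewrite formDr !formZr expr0 mul1r; case: s.
Qed.

Lemma RIc_RI lam : RIc lam -> regular_integral lam.
Proof.
move=> h a [i [j [s [t [nij ->]]]]].
have nij' : (i : nat) <> j by move=> e; move: nij; rewrite -val_eqE /= e eqxx.
have [z [hz e]] := h i j (s == t) (ltn_ord i) (ltn_ord j) nij'.
exists ((-1) ^+ s * z); split.
  by rewrite mulf_neq0 // signr_eq0.
change (dform (mu lam) ((-1) ^+ s *: eps K m i + (-1) ^+ t *: eps K m j) = ((-1) ^+ s * z)%:~R).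
rewrite formDr !formZr -/(cx lam i) -/(cx lam j) intrM -e; clear e.
by case: s; case: t; rewrite /sg /= ?expr0 ?expr1 ?rmorphN ?rmorph1; ring.
Qed.

Lemma Pos_int v : Pos v -> exists z : int, z != 0 /\ v = z%:~R.
Proof. by move=> [k ->]; exists (k.+1)%:Z. Qed.
Lemma PosD a b : Pos a -> Pos b -> Pos (a + b).
Proof. by move=> [k ->] [l ->]; exists (k + l.+1)%N; rewrite -natrD addSn. Qed.

Lemma dom_RIc (hm : (2 <= m)%N) lam : dominant_integral lam -> RIc lam.
Proof.
move=> hd.
have hnode : forall b : 'I_m, Pos (dform (mu lam) (alpha K b)).
  by move=> b; have [k hk] := hd b; rewrite ev_alpha // hk; exists k; rewrite -natr1.
have hs : forall i, (i.+1 < m)%N -> Pos (cx lam i - cx lam i.+1).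
  move=> i hi; have := hnode (Ordinal (ltnW hi)); rewrite form_alpha_cx /= hi //.
have hf : Pos (cx lam (m - 2) + cx lam (m - 1)).
  have hm1 : (m - 1 < m)%N by lia.
  have := hnode (Ordinal hm1); rewrite form_alpha_cx /= (_ : (m - 1).+1 < m = false)%N //; lia.
have hdiff : forall i j, (i < j < m)%N -> Pos (cx lam i - cx lam j).
  move=> i j; elim: j => [|j IH] hij; first lia.
  case: (eqVneq i j) => [->|nij]; first by apply: hs; lia.
  rewrite (_ : cx lam i - cx lam j.+1 = (cx lam i - cx lam j) + (cx lam j - cx lam j.+1)); last by ring.
  by apply: PosD; [apply: IH; lia | apply: hs; lia].
have h1 : forall i, (i < m - 1)%N -> Pos (cx lam i + cx lam (m - 1)).
  move=> i hi; case: (eqVneq i (m - 2)%N) => [->|ni] //.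
  rewrite (_ : cx lam i + cx lam (m - 1) = (cx lam i - cx lam (m - 2)) + (cx lam (m - 2) + cx lam (m - 1))); last by ring.
  by apply: PosD => //; apply: hdiff; lia.
have hsum : forall i j, (i < j < m)%N -> Pos (cx lam i + cx lam j).
  move=> i j hij; case: (eqVneq j (m - 1)%N) => [->|nj]; first by apply: h1; lia.
  rewrite (_ : cx lam i + cx lam j = (cx lam i - cx lam (m - 1)) + (cx lam j + cx lam (m - 1))); last by ring.
  by apply: PosD; [apply: hdiff; lia | apply: h1; lia].
move=> i j s hi hj nij; case: (ltnP i j) => hij.
  case: s; rewrite /sg ?mul1r ?mulN1r; apply: Pos_int; [apply: hsum|apply: hdiff]; lia.
case: s; rewrite /sg ?mul1r ?mulN1r.
  by apply: Pos_int; rewrite addrC; apply: hsum; lia.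
have [k hk] : Pos (cx lam j - cx lam i) by apply: hdiff; lia.
exists (- (k.+1)%:Z); split => //.
by rewrite rmorphN /= -[cx lam i - _]opprB hk.
Qed.

Lemma tau_invol pp k : tau pp (tau pp k) = k.
Proof.
rewrite /tau; case: (k =P pp) => [->|n1].
  by rewrite (eqn_false (_ : pp.+1 <> pp)) ?eqxx //; lia.
case: (k =P pp.+1) => [->|n2]; first by rewrite eqxx.
by rewrite (eqn_false n1) (eqn_false n2).
Qed.

Lemma tau_ltm' pp a : (pp.+1 < m)%N -> (a < m)%N -> (tau pp a < m)%N.
Proof. move=> h1 h2; rewrite /tau; case: (a =P pp) => ?; case: (a =P pp.+1) => ? /=; lia. Qed.
Lemma tau_inj' pp a b : tau pp a = tau pp b -> a = b.
Proof.
rewrite /tau; case: (a =P pp) => ?; case: (a =P pp.+1) => ?;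
  case: (b =P pp) => ?; case: (b =P pp.+1) => ? /=; lia.
Qed.

Lemma sg_sq s : sg K s * sg K s = 1.
Proof. by case: s; rewrite /sg ?mulr1 ?mulrNN ?mulr1. Qed.

Lemma RIc_transfer lam lam' (pp : nat) (f : nat -> bool) : (pp.+1 < m)%N ->
  (forall k, cx lam' k = sg K (f k) * cx lam (tau pp k)) -> RIc lam' -> RIc lam.
Proof.
move=> hp hx h i j s hi hj nij.
set i' := tau pp i; set j' := tau pp j.
have hi' : (i' < m)%N by apply: tau_ltm'.
have hj' : (j' < m)%N by apply: tau_ltm'.
have nij' : i' <> j' by move=> /tau_inj'.
have [z [hz e]] := h i' j' (s == (f i' == f j')) hi' hj' nij'.
have xi : cx lam i = sg K (f i') * cx lam' i' by rewrite hx tau_invol mulrA sg_sq mul1r.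
have xj : cx lam j = sg K (f j') * cx lam' j' by rewrite hx tau_invol mulrA sg_sq mul1r.
exists ((if f i' then 1 else -1) * z); split.
  by rewrite mulf_neq0 //; case: (f i').
rewrite intrM -e xi xj; clear e xi xj.
by case: (f i'); case: (f j'); case: s; rewrite /sg /= ?rmorphN ?rmorph1; ring.
Qed.

Lemma RIc_step (hm : (3 <= m)%N) lam b : RIc (sdot (alpha K b) lam) -> RIc lam.
Proof.
have hm2 : (2 <= m)%N by lia.
case: (ltnP b.+1 m) => hb.
  have eb : b = swapnode hb by apply/val_inj.
  apply: (@RIc_transfer lam _ b (fun _ => true) hb) => k.
  rewrite eb cx_swap /tau /sg mul1r /=.
  by case: ifP => _ //; case: ifP.
have eb : b = flipnode hm2 by apply/val_inj => /=; have := ltn_ord b; lia.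
have hp : ((m - 2).+1 < m)%N by lia.
have e21 : (m - 2).+1 = (m - 1)%N by lia.
apply: (@RIc_transfer lam _ (m - 2) (fun k => ~~ inT (m - 2) k) hp) => k.
rewrite eb cx_flip /tau /inT /sg e21.
case: (k =P (m - 2)%N) => [ek|n1] /=; first by rewrite mulN1r.
case: (k =P (m - 1)%N) => [ek|n2] /=; first by rewrite mulN1r.
by rewrite mul1r.
Qed.

Lemma RIc_sdots (hm : (3 <= m)%N) bs lam : RIc (sdots bs lam) -> RIc lam.
Proof.
elim: bs lam => [|b bs IH] lam //= h.
by apply: (RIc_step hm (b := b)); apply: IH.
Qed.

End RIsec.

Section Lattice.
Variables (K : fieldType) (m : nat) (R : {pred K}) (p n : nat).
Hypothesis hR : subring_closed R.
Implicit Types (lam : 'rV[K]_m).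

Lemma R1 : 1 \in R. Proof. by case: hR. Qed.
Lemma RB x y : x \in R -> y \in R -> x - y \in R. Proof. by case: hR => _ h _; apply: h. Qed.
Lemma RM x y : x \in R -> y \in R -> x * y \in R. Proof. by case: hR => _ _ h; apply: h. Qed.
Lemma R0 : 0 \in R. Proof. by rewrite -(subrr 1); apply: RB; apply: R1. Qed.
Lemma RN x : x \in R -> - x \in R. Proof. by move=> h; rewrite -sub0r; apply: RB => //; apply: R0. Qed.
Lemma RD x y : x \in R -> y \in R -> x + y \in R.
Proof. by move=> hx hy; rewrite -(opprK y); apply: RB => //; apply: RN. Qed.
Lemma Rnat k : (k%:R : K) \in R.
Proof. by elim: k => [|k IH]; [apply: R0 | rewrite -natr1; apply: RD => //; apply: R1]. Qed.
Lemma Rint x : isInt x -> x \in R.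
Proof.
move=> [z ->]; case: z => k; first by rewrite -pmulrn; apply: Rnat.
by rewrite NegzE mulrNz; apply: RN; rewrite -pmulrn; apply: Rnat.
Qed.
Lemma Rsum (I : finType) (F : I -> K) : (forall i, F i \in R) -> \sum_i F i \in R.
Proof. by move=> h; elim/big_ind: _ => //; [apply: R0 | move=> x y; apply: RD]. Qed.

Lemma lattice_step (hm : (2 <= m)%N) lam b :
  lattice_cond R p n lam -> lattice_cond R p n (sdot (alpha K b) lam).
Proof.
move=> hl r hr.
set S := \sum_i r i * dform (alpha K b) (alpha K i).
have SR : S \in R by apply: Rsum => i; apply: RM => //; apply: Rint; apply: isInt_aa.
have hev : forall i, ev (sdot (alpha K b) lam) (alpha K i) =
   ev lam (alpha K i) - (ev lam (alpha K b) + 1) * dform (alpha K b) (alpha K i).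
  by move=> i; rewrite -ev_alpha // /ev /sdot formBl formZl.
have -> : \sum_i r i * ev (sdot (alpha K b) lam) (alpha K i) =
   \sum_i r i * ev lam (alpha K i) - (ev lam (alpha K b) + 1) * S.
  rewrite /S mulr_sumr -sumrB; apply: eq_bigr => i _; rewrite hev; ring.
have HA := hl r hr.
have hr' : forall i, (if i == b then S else 0) \in R by move=> i; case: (i == b) => //; apply: R0.
have HB := hl (fun i => if i == b then S else 0) hr'.
have eHB : \sum_i (if i == b then S else 0) * ev lam (alpha K i) = S * ev lam (alpha K b).
  rewrite (bigD1 b) //= eqxx big1 ?addr0 // => i /negbTE ->; by rewrite mul0r.
rewrite eHB in HB.
rewrite (_ : _ * (_ - _) = (p ^ n)%:R * \sum_i r i * ev lam (alpha K i) -
   ((p ^ n)%:R * (S * ev lam (alpha K b)) + (p ^ n)%:R * S)); last by ring.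
by apply: RB => //; apply: RD => //; apply: RM => //; apply: Rnat.
Qed.

Lemma lattice_sdots (hm : (2 <= m)%N) bs lam :
  lattice_cond R p n lam -> lattice_cond R p n (sdots bs lam).
Proof.
elim: bs lam => [|b bs IH] lam //= h.
by apply: IH; apply: lattice_step.
Qed.

End Lattice.

Unset Implicit Arguments.

Theorem proposition3p54 (K : fieldType) (R : {pred K}) (p n m : nat) :
  [pchar K] =i pred0 -> prime p -> odd p -> subring_closed R ->
  (3 <= m)%N ->
  forall lam : 'rV[K]_m,
    lattice_cond R p n lam -> ~ regular_integral lam ->
    exists bs : seq 'I_m,
      (forall (s1 s2 : seq 'I_m) (b : 'I_m), bs = s1 ++ b :: s2 ->
         ~ isNat (ev (sdots s1 lam) (alpha K b))) /\
      in_S R p n (sdots bs lam).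
Proof.
move=> hc _ _ hR hm lam hl hnRI.
have hm2 : (2 <= m)%N by lia.
have [lam1 [r1 g1]] := @step1 K m hm m 0 lam (ltac:(lia)) (fun p0 h => ltac:(lia)).
have [lam2 [r2 [g2 hneg]]] := @step2 K m hc hm (meas m (cx lam1)) lam1 (leqnn _) g1.
have [bs [hok hbs]] := reachable_trans r1 r2.
exists bs; split; first exact: hok.
rewrite hbs; split => //.
- by rewrite -hbs; apply: lattice_sdots.
- move=> hd; apply: hnRI; apply: RIc_RI; apply: (RIc_sdots hm (bs := bs)).
  by rewrite hbs; apply: dom_RIc.
Qed.
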